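(* Let $A$ be a unital associative algebra over $k$ with unit $1$, let $\rho:A\to A$ be linear with curvature $\omega(x,y)=\rho(xy)-\rho(x)\rho(y)$, and suppose that for all $x,y\in A$ $$x\,\omega(1,y)-x\,\omega(1,1)\,y-\omega(x,y)+\omega(x,1)\,y=0.$$ Then: (i) if $\rho(1)=1$, $\rho$ is an algebra homomorphism; (ii) if $\rho(1)=0$, $\rho$ is an Ito derivative.
   Context: $k=\mathbb{R}$ or $\mathbb{C}$. An Ito derivative is a linear map $d:A\to A$ with $d(1)=0$ and $d(xy)=d(x)y+xd(y)+d(x)d(y)$ for all $x,y\in A$. *)

(* Defs.v *)
From mathcomp Require Import all_boot all_order all_algebra.
Set Implicit Arguments. Unset Strict Implicit. Unset Printing Implicit Defensive.
Import GRing.Theory.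
Local Open Scope ring_scope.

Definition curvature (k : fieldType) (A : algType k) (rho : A -> A) (x y : A) : A :=
  rho (x * y) - rho x * rho y.

Definition is_alg_hom (k : fieldType) (A : algType k) (f : A -> A) : Prop :=
  linear f /\ f 1 = 1 /\ (forall x y : A, f (x * y) = f x * f y).

Definition is_Ito_derivative (k : fieldType) (A : algType k) (d : A -> A) : Prop :=
  linear d /\ d 1 = 0 /\
  (forall x y : A, d (x * y) = d x * y + x * d y + d x * d y).

(* Main.v *)
Require Import Defs.
From mathcomp Require Import all_boot all_order all_algebra.
Import GRing.Theory.
Local Open Scope ring_scope.

Lemma zl (V : zmodType) (a b c d : V) : a + (- b - c - d) = - c + (a - d) - b.
Proof. rewrite !addrA [-c + a]addrC -!addrA; congr (_ + _); rewrite addrCA; congr (_ + _); by rewrite addrC. Qed.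

Theorem mainTheorem5 (k : fieldType) (A : algType k) (rho : A -> A)
  (hlin : linear rho)
  (hcond : forall x y : A,
     x * curvature rho 1 y - x * curvature rho 1 1 * y
     - curvature rho x y + curvature rho x 1 * y = 0) :
  (rho 1 = 1 -> is_alg_hom rho) /\ (rho 1 = 0 -> is_Ito_derivative rho).
Proof.
split=> h1.
  split; first exact: hlin.
  split; first exact: h1.
  move=> x y; have := hcond x y; rewrite /curvature !mul1r !mulr1 h1 !mul1r !subrr.
  rewrite !(mulr0, mul0r, subr0, addr0, sub0r) => H.
  move: H; rewrite mulr1 subrr mul0r addr0 => /eqP; rewrite oppr_eq0 subr_eq0 => /eqP; done.
split; first exact: hlin.
split; first exact: h1.
move=> x y; have := hcond x y; rewrite /curvature !mul1r !mulr1 h1 !mul0r !mulr0 subr0.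
rewrite !(mulr0, mul0r, subr0, addr0, sub0r) => H.
apply/eqP; rewrite -subr_eq0; apply/eqP; rewrite -[RHS]oppr0 -H.
rewrite !opprD !opprK.
(* goal: rho(xy) - (rho x y + x rho y + rho x rho y) = -(x rho y) + rho(xy) - rho x rho y - rho x y *)
by rewrite zl.
Qed.
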